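(* Every $f\in\mathcal C^\infty(\mathbb R^{\mathbb N})$ is locally cylindrical: for every $x\in\mathbb R^{\mathbb N}$ there exist an open neighbourhood $U$ of $x$, a finite set $N_0\subset\mathbb N$ and a continuous function $g$ on $\pi_{N_0}(U)$ such that $f|_U=g\circ\pi_{N_0}|_U$, where $\pi_{N_0}:\mathbb R^{\mathbb N}\to\mathbb R^{N_0}$ is the coordinate projection.
   Context: $\mathbb R^{\mathbb N}$ is the space of real sequences with the product topology. It carries the canonical $\mathcal C^\infty$ structure of a product: its structure curves are the maps $c:\mathbb R\to\mathbb R^{\mathbb N}$ all of whose components $c_n:\mathbb R\to\mathbb R$ are smooth, and $\mathcal C^\infty(\mathbb R^{\mathbb N})$ is the set of functions $f:\mathbb R^{\mathbb N}\to\mathbb R$ such that $f\circ c\in C^\infty(\mathbb R,\mathbb R)$ for every structure curve $c$. *)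

(* Defs.v *)
From HB Require Import structures.
From mathcomp Require Import all_boot all_order all_algebra finmap.
From mathcomp Require Import all_classical all_reals all_analysis.
Set Implicit Arguments. Unset Strict Implicit. Unset Printing Implicit Defensive.
Import Order.TTheory GRing.Theory Num.Theory numFieldNormedType.Exports.
Local Open Scope classical_set_scope.
Local Open Scope ring_scope.

(* R^N : real sequences with the product topology (topology of pointwise
   convergence). *)
Notation RN R := {ptws nat -> R^o}.

Definition smooth (R : realType) (h : R -> R) : Prop :=
  forall (n : nat) (t : R), derivable (derive1n n h) t 1.

Definition structure_curve (R : realType) (c : R -> RN R) : Prop :=
  forall n : nat, smooth (fun t => c t n).

Definition Cinf_RN (R : realType) (f : RN R -> R) : Prop :=
  forall c : R -> RN R, structure_curve c -> smooth (f \o c).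

Notation RN0 R N0 := {ptws N0 -> R^o}.
Definition proj_N0 (R : realType) (N0 : {fset nat}) (x : RN R) : RN0 R N0 :=
  fun i : N0 => x (val i).
Arguments proj_N0 {R} N0 x.

(* Main.v *)
Require Import Defs.
From HB Require Import structures.
From mathcomp Require Import all_boot all_order all_algebra finmap.
From mathcomp Require Import all_classical all_reals all_analysis.
Local Open Scope classical_set_scope.
Local Open Scope ring_scope.

Module Helpers.
From mathcomp Require Import ring lra zify.
Set Implicit Arguments. Unset Strict Implicit. Unset Printing Implicit Defensive.
Import Order.TTheory GRing.Theory Num.Theory numFieldNormedType.Exports.
Local Open Scope classical_set_scope.
Local Open Scope ring_scope.

Section Layer1.
Variable R : realType.
Implicit Types (f g : R -> R).

Lemma is_derive_d1 f (t d : R) : is_derive t (1:R) f d -> derive1 f t = d.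
Proof. by move=> H; rewrite derive1E derive_val. Qed.

Lemma near_eq_d1 f g t : (\near t, f t = g t) -> derive1 f t = derive1 g t.
Proof. by move=> H; rewrite !derive1E; apply: near_eq_derive. Qed.

Lemma d1n_open (O : set R) f g : open O -> (forall u, O u -> f u = g u) ->
  forall m u, O u -> derive1n m f u = derive1n m g u.
Proof.
move=> oO fg m; elim: m => [|m IH] u Ou; first exact: fg.
rewrite !derive1nS; apply: near_eq_d1.
have Hn : nbhs u O by apply: open_nbhs_nbhs; split.
by apply: filterS Hn => v Ov; apply: IH.
Qed.

Fixpoint Ck (n : nat) f : Prop :=
  if n is n'.+1 then (forall t, derivable f t 1) /\ Ck n' (derive1 f) else True.

Lemma d1nSr n f : derive1n n.+1 f = derive1n n (derive1 f).
Proof. by rewrite /derive1n iterSr. Qed.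

Lemma smoothP f : smooth f <-> forall n, Ck n f.
Proof.
split.
  move=> sf n; elim: n f sf => [//|n IH] f sf; split; first exact: (sf 0%N).
  by apply: IH => m t; rewrite -d1nSr; apply: sf.
move=> H n; elim: n f H => [|n IH] f H t; first by case: (H 1%N).
rewrite d1nSr; apply: IH => m; by case: (H m.+1).
Qed.

Lemma Ck_mono n f : Ck n.+1 f -> Ck n f.
Proof.
elim: n f => [//|n IH] f [df Hf]; split => //; exact: IH.
Qed.

Lemma Ck_der n f : Ck n.+1 f -> Ck n (derive1 f).
Proof. by case. Qed.

Lemma Ck_dv n f : Ck n.+1 f -> forall t, derivable f t 1.
Proof. by case. Qed.

Lemma d1D f g : (forall t, derivable f t 1) -> (forall t, derivable g t 1) ->
  derive1 (f + g) = derive1 f + derive1 g.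
Proof. by move=> df dg; apply: boolp.funext => t; rewrite /= !derive1E deriveD // -!derive1E. Qed.

Lemma d1M f g : (forall t, derivable f t 1) -> (forall t, derivable g t 1) ->
  derive1 (f * g) = f * derive1 g + g * derive1 f.
Proof. by move=> df dg; apply: boolp.funext => t; rewrite /= !derive1E deriveM // -!derive1E. Qed.

Lemma CkD n f g : Ck n f -> Ck n g -> Ck n (f + g).
Proof.
elim: n f g => [//|n IH] f g [df Hf] [dg Hg]; split.
  by move=> t; apply: derivableD.
by rewrite d1D //; apply: IH.
Qed.

Lemma CkM n f g : Ck n f -> Ck n g -> Ck n (f * g).
Proof.
elim: n f g => [//|n IH] f g Hf Hg; split.
  by move=> t; apply: derivableM; [case: Hf|case: Hg].
rewrite d1M; [|by case: Hf|by case: Hg].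
apply: CkD; apply: IH; by [apply: Ck_mono|apply: Ck_der].
Qed.

Lemma Ck_cst n c : Ck n (cst c).
Proof.
elim: n c => [//|n IH] c; split; first by move=> t; apply: derivable_cst.
have -> : derive1 (cst c) = cst (0:R) by apply: boolp.funext => t; rewrite derive1_cst.
exact: IH.
Qed.


Lemma aff_der (a b t : R) : is_derive t (1:R) (fun t => a * t + b) a.
Proof.
have H : is_derive t (1:R) (a *: (@id R) + cst b) (a *: 1 + 0) by apply: is_deriveD.
by rewrite scaler1 addr0 in H.
Qed.

Lemma CkV n f : (forall t, f t != 0) -> Ck n f -> Ck n (fun t => (f t)^-1).
Proof.
move=> nz; elim: n f nz => [//|n IH] f nz Hf; split.
  by move=> t; apply: derivableV => //; case: Hf.
have -> : derive1 (fun t => (f t)^-1) =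
   (cst (-1)) * ((fun t => (f t)^-1) * (fun t => (f t)^-1)) * derive1 f.
  apply: boolp.funext => t; rewrite /= !derive1E deriveV //; last by case: Hf.
  rewrite -!derive1E /= mulN1r; change (- (f t)^-2 * derive1 f t = - ((f t)^-1 * (f t)^-1) * derive1 f t); by rewrite expr2 invfM.
apply: CkM; last by apply: Ck_der.
apply: CkM; first exact: Ck_cst.
by apply: CkM; apply: IH => //; apply: Ck_mono.
Qed.

Lemma Ck_aff n f (a b : R) : Ck n f -> Ck n (fun t => f (a * t + b)).
Proof.
elim: n f => [//|n IH] f Hf; split.
  move=> t; have Hd : derivable f (a * t + b) 1 by case: Hf.
  by case: (@is_derive1_comp R f (fun t => a * t + b) t _ a (derivableP Hd) (aff_der a b t)).
have -> : derive1 (fun t => f (a * t + b)) = cst a * (fun t => derive1 f (a * t + b)).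
  apply: boolp.funext => t.
  have Hd : derivable f (a * t + b) 1 by case: Hf.
  rewrite (is_derive_d1 (@is_derive1_comp R f (fun t => a * t + b) t _ a (derivableP Hd) (aff_der a b t))).
  by rewrite -derive1E mulrC.
apply: CkM; first exact: Ck_cst.
by apply: IH; apply: Ck_der.
Qed.

Lemma Ck_sum n N (F : nat -> R -> R) : (forall k, Ck n (F k)) ->
  Ck n (fun t => \sum_(k < N) F k t).
Proof.
move=> HF; elim: N => [|N IH].
  have -> : (fun t => \sum_(k < 0) F k t) = cst 0.
    by apply: boolp.funext => t; rewrite big_ord0.
  exact: Ck_cst.
have -> : (fun t => \sum_(k < N.+1) F k t) = (fun t => \sum_(k < N) F k t) + F N.
  by apply: boolp.funext => t; rewrite big_ord_recr.
exact: CkD.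
Qed.

Lemma Ck_scale n f (c : R) : Ck n f -> Ck n (fun t => c * f t).
Proof. by move=> Hf; apply: (CkM (Ck_cst n c) Hf). Qed.

End Layer1.


Section Layer2.
Variable R : realType.
Implicit Types (f g : R -> R).

Lemma flat_derive f a :
  (forall e : R, 0 < e -> exists2 d : R, 0 < d &
     forall h, 0 < `|h| < d -> `|f (h + a) - f a| <= e * `|h|) ->
  is_derive a (1:R) f 0.
Proof.
move=> H.
have C : (fun h : R => h^-1 *: ((f \o shift a) (h *: 1) - f a)) @ 0^' --> (0:R).
  apply/cvgrPdist_le => e e0.
  have [d d0 Hd] := H e e0.
  exists d => //= h /= hd hne0.
  rewrite sub0r normrN /= scaler1 normrM normrV ?unitfE //.
  have h0 : 0 < `|h| by rewrite normr_gt0.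
  rewrite sub0r normrN in hd.
  rewrite ler_pdivrMl // mulrC; apply: Hd; by rewrite h0.
apply: DeriveDef; first by apply/cvg_ex; exists 0.
exact: cvg_lim C.
Qed.

Definition Fp (p : {poly R}) (u : R) : R :=
  if 0 < u then p.[u^-1] * expR (- u^-1) else 0.

Definition qp (p : {poly R}) : {poly R} := 'X^2 * (p - p^`()).

Lemma poly_exp_bound (p : {poly R}) (e : R) : 0 < e ->
  exists2 M : R, 1 <= M & forall x, M <= x -> `|p.[x]| * expR (- x) <= e.
Proof.
move=> e0.
set d := size p.
set A := \sum_(i < d) `|p`_i|.
have A0 : 0 <= A by apply: sumr_ge0 => i _.
set K := A * (d.+1)`!%:R.
have K0 : 0 <= K by apply: mulr_ge0 => //; apply: ler0n.
exists (1 + K / e); first by rewrite lerDl divr_ge0 // ltW.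
move=> x Mx.
have x1 : 1 <= x by apply: le_trans Mx; rewrite lerDl divr_ge0 // ltW.
have x0 : 0 < x by apply: lt_le_trans x1.
have hp : `|p.[x]| <= A * x ^+ d.
  rewrite horner_coef /A mulr_suml.
  apply: le_trans (ler_norm_sum _ _ _) _.
  apply: ler_sum => i _; rewrite normrM normrX (ger0_norm (ltW x0)).
  apply: ler_wpM2l => //; apply: ler_weXn2l => //; exact: ltnW.
have he : x ^+ d.+1 / (d.+1)`!%:R <= expR x.
  apply: le_trans (expR_ge1Dxn d (ltW x0)); by rewrite lerDr.
have fpos : 0 < (d.+1)`!%:R :> R by rewrite ltr0n fact_gt0.
rewrite expRN.
have ex0 : 0 < expR x by apply: expR_gt0.
rewrite ler_pdivrMr //.
apply: le_trans hp _.
have : A * x ^+ d <= e * (x ^+ d.+1 / (d.+1)`!%:R).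
  rewrite exprS mulrA [e * _]mulrC -!mulrA mulrCA [A * _]mulrC.
  apply: ler_wpM2l; first exact: exprn_ge0 (ltW x0).
  have Kx : K / e <= x by apply: le_trans Mx; rewrite lerDr.
  rewrite ler_pdivrMr // in Kx.
  by rewrite mulrA ler_pdivlMr.
move=> h; apply: le_trans h _.
by apply: ler_wpM2l; [exact: ltW|].
Qed.

Lemma near_pos (t : R) : 0 < t -> \forall u \near t, 0 < u.
Proof. by move=> t0; apply: open_nbhs_nbhs; split => //; apply: open_gt. Qed.

Lemma near_neg (t : R) : t < 0 -> \forall u \near t, u < 0.
Proof. by move=> t0; apply: open_nbhs_nbhs; split => //; apply: open_lt. Qed.

Lemma Fp_der (p : {poly R}) (t : R) : is_derive t (1:R) (Fp p) (Fp (qp p) t).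
Proof.
have [t0|t0|->] := ltgtP t 0.
- have H : is_derive t (1:R) (cst (0:R)) 0 by apply: is_derive_cst.
  apply: is_derive_eq; last by rewrite /Fp ltNge ltW.
  apply: near_eq_is_derive H.
  by near=> u; rewrite /Fp ltNge ltW //; near: u; apply: near_neg.
- have tn0 : t != 0 by rewrite gt_eqF.
  have inv_d : is_derive t (1:R) (fun u : R => u^-1) (- t^-2).
    have := @is_deriveV R id t 1 1 tn0 (is_derive_id _ _).
    by rewrite scaler1.
  have hp := @is_derive1_comp R (horner p) (fun u : R => u^-1) t _ _
     (is_derive_poly p t^-1) inv_d.
  have ninv : is_derive t (1:R) (fun u : R => - u^-1) (t^-2).
    have := @is_deriveN _ _ _ (fun u : R => u^-1) t 1 _ inv_d.
    by rewrite opprK.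
  have he := @is_derive1_comp R expR (fun u : R => - u^-1) t _ _
     (is_derive_expR (- t^-1)) ninv.
  have hM := is_deriveM hp he.
  apply: is_derive_eq.
    apply: near_eq_is_derive hM.
    by near=> u; rewrite /Fp; have -> : 0 < u by near: u; apply: near_pos.
  rewrite /Fp t0 /qp !hornerE /=.
  rewrite -exprVn.
  rewrite /GRing.scale /=.
  ring.
- have -> : Fp (qp p) 0 = 0 by rewrite /Fp ltxx.
  apply: flat_derive => e e0.
  have [M M1 HM] := poly_exp_bound (p * 'X) e0.
  have M0 : 0 < M by apply: lt_le_trans M1.
  exists M^-1; first by rewrite invr_gt0.
  move=> h /andP[h0 hM].
  rewrite addr0 {2}/Fp ltxx subr0.
  rewrite /Fp; case: ifP => hpos; last by rewrite normr0 mulr_ge0 // ltW.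
  have hn : `|h| = h by rewrite gtr0_norm.
  rewrite hn in hM *.
  have x0 : 0 < h^-1 by rewrite invr_gt0.
  have := HM h^-1 _.
  rewrite hornerM hornerX normrM (gtr0_norm x0) => H.
  rewrite normrM (ger0_norm (expR_ge0 _)).
  rewrite -(ler_pM2r x0) mulrK ?unitfE ?gt_eqF // mulrAC.
  apply: H. rewrite -(invrK M) lef_pV2 ?posrE ?invr_gt0 //; exact: ltW.
Unshelve. all: by end_near.
Qed.

Lemma Fp_d1 (p : {poly R}) : derive1 (Fp p) = Fp (qp p).
Proof. by apply: boolp.funext => t; apply: is_derive_d1; apply: Fp_der. Qed.

Lemma Fp_Ck n (p : {poly R}) : Ck n (Fp p).
Proof.
elim: n p => [//|n IH] p; split; last by rewrite Fp_d1.
by move=> t; case: (Fp_der p t).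
Qed.

Definition Ef := Fp 1.

Lemma Ef_le0 u : u <= 0 -> Ef u = 0.
Proof. by move=> u0; rewrite /Ef /Fp ltNge u0. Qed.

Lemma Ef_gt0 u : 0 < u -> 0 < Ef u.
Proof. by move=> u0; rewrite /Ef /Fp u0 hornerC mul1r expR_gt0. Qed.

Lemma Ef_ge0 u : 0 <= Ef u.
Proof. by have [u0|u0] := ltP 0 u; [exact/ltW/Ef_gt0|rewrite Ef_le0]. Qed.

Definition sig (u : R) := Ef u * (Ef u + Ef (-1 * u + 1))^-1.

Lemma sig_den u : Ef u + Ef (-1 * u + 1) != 0.
Proof.
have [u0|u0] := ltP 0 u.
  by rewrite gt_eqF // ltr_pwDl // ?Ef_gt0 // Ef_ge0.
by rewrite gt_eqF // ltr_pwDr // ?Ef_ge0 // Ef_gt0 // mulN1r ltr_pwDr // oppr_ge0.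
Qed.

Lemma sig_Ck n : Ck n sig.
Proof.
have -> : sig = Ef * (fun u => (Ef u + Ef (-1 * u + 1))^-1) by [].
apply: CkM; first exact: Fp_Ck.
apply: CkV; first exact: sig_den.
have -> : (fun u => Ef u + Ef (-1 * u + 1)) = Ef + (fun u => Ef (-1 * u + 1)) by [].
by apply: CkD; [exact: Fp_Ck| apply: Ck_aff; exact: Fp_Ck].
Qed.

Lemma sig_le0 u : u <= 0 -> sig u = 0.
Proof. by move=> u0; rewrite /sig Ef_le0 // mul0r. Qed.

Lemma sig_ge1 u : 1 <= u -> sig u = 1.
Proof.
move=> u1; rewrite /sig (@Ef_le0 (-1 * u + 1)); last by rewrite mulN1r addrC subr_le0.
by rewrite addr0 divff // gt_eqF // Ef_gt0 // (lt_le_trans ltr01).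
Qed.

Definition beta (u : R) := sig (8 * u + 3) * sig (-8 * u + 3).

Lemma beta_Ck n : Ck n beta.
Proof.
have -> : beta = (fun u => sig (8 * u + 3)) * (fun u => sig (-8 * u + 3)) by [].
by apply: CkM; apply: Ck_aff; apply: sig_Ck.
Qed.

Lemma beta_out u : u <= -(3/8) \/ 3/8 <= u -> beta u = 0.
Proof.
case=> h; rewrite /beta.
  by rewrite sig_le0 ?mul0r //; lra.
by rewrite (@sig_le0 (-8 * u + 3)) ?mulr0 //; lra.
Qed.

Lemma beta_in u : -(1/4) <= u <= 1/4 -> beta u = 1.
Proof.
move=> /andP[h1 h2]; rewrite /beta sig_ge1; last by lra.
by rewrite sig_ge1 ?mulr1 //; lra.
Qed.

Definition psi (v : R) := beta (1 * v + (-(3/2))).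

Lemma psi_Ck n : Ck n psi.
Proof. by apply: Ck_aff; apply: beta_Ck. Qed.

Lemma psi_out v : v <= 9/8 \/ 15/8 <= v -> psi v = 0.
Proof. by case=> h; rewrite /psi beta_out //; [left|right]; lra. Qed.

Lemma psi_in v : 5/4 <= v <= 7/4 -> psi v = 1.
Proof. by move=> /andP[h1 h2]; rewrite /psi beta_in //; apply/andP; split; lra. Qed.

End Layer2.


Section Layer3.
Variable R : realType.
Implicit Types (f g phi : R -> R) (a : nat -> R).

Definition Van phi := forall v : R, v < 9/8 \/ 15/8 < v -> phi v = 0.

Lemma Van_d1 phi : Van phi -> Van (derive1 phi).
Proof.
move=> H v Hv.
have oO : open [set v : R | v < 9/8 \/ 15/8 < v] by apply: openU; [apply: open_lt|apply: open_gt].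
have := @d1n_open R _ phi (cst 0) oO H 1%N v Hv.
by rewrite /= derive1_cst.
Qed.

Lemma Van_out phi v : Van phi -> v <= 1 \/ 2 <= v -> phi v = 0.
Proof. by move=> H [h|h]; apply: H; [left|right]; lra. Qed.

Definition Rapid a := forall j : nat, exists C : R, forall k, `|a k| * ((2:R) ^+ k) ^+ j <= C.

Definition Nt (t : R) : nat := (Num.truncn (2 / t)).+1.

Definition Gl phi a (t : R) : R := \sum_(k < Nt t) a k * phi (2 ^+ k * t).

Lemma sum_tail (F : nat -> R) N N' : (N <= N')%N -> (forall k, (N <= k)%N -> F k = 0) ->
  \sum_(k < N') F k = \sum_(k < N) F k.
Proof.
move=> NN' HF.
rewrite -!(big_mkord xpredT) (big_cat_nat (leq0n N) NN') /=.
rewrite [X in _ + X]big1_seq ?addr0 // => k /andP[_].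
by rewrite mem_index_iota => /andP[Nk _]; apply: HF.
Qed.

Lemma two_pow_ge (k : nat) : (k%:R : R) <= 2 ^+ k.
Proof.
have := ltn_expl k (ltnSn 1); rewrite -(ltr_nat R) natrX => h.
exact: ltW.
Qed.

Lemma two_pow_gt0 (k : nat) : (0 : R) < 2 ^+ k.
Proof. by apply: exprn_gt0. Qed.

Lemma tail_zero phi t (N : nat) : Van phi -> 2 <= N%:R * t ->
  forall k, (N <= k)%N -> phi (2 ^+ k * t) = 0.
Proof.
move=> Hv Nt2 k Nk; apply: Van_out => //; right.
have t0 : 0 < t.
  rewrite ltNge; apply/negP => t0.
  have : N%:R * t <= 0 by rewrite mulr_ge0_le0.
  lra.
apply: le_trans Nt2 _; apply: ler_wpM2r; first exact: ltW.
apply: le_trans (two_pow_ge k); by rewrite ler_nat.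
Qed.

Lemma Nt_gt (t : R) : 0 < t -> 2 < (Nt t)%:R * t.
Proof.
move=> t0; rewrite -ltr_pdivrMr //; exact: truncnS_gt.
Qed.

Lemma Gl_eq phi a t (M : nat) : Van phi -> 2 <= M%:R * t ->
  Gl phi a t = \sum_(k < M) a k * phi (2 ^+ k * t).
Proof.
move=> Hv Mt.
have t0 : 0 < t.
  rewrite ltNge; apply/negP => t0.
  have : M%:R * t <= 0 by rewrite mulr_ge0_le0.
  lra.
have HN := ltW (Nt_gt t0).
rewrite /Gl.
have [le|le] := leqP (Nt t) M.
  rewrite (@sum_tail (fun k => a k * phi (2 ^+ k * t)) (Nt t) M) // => k Nk.
  by rewrite (tail_zero Hv HN) // mulr0.
rewrite (@sum_tail (fun k => a k * phi (2 ^+ k * t)) M (Nt t)) ?(ltnW le) // => k Nk.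
by rewrite (tail_zero Hv Mt) // mulr0.
Qed.

Lemma Gl_neg phi a t : Van phi -> t <= 0 -> Gl phi a t = 0.
Proof.
move=> Hv t0; rewrite /Gl big1 // => k _.
rewrite (@Van_out phi) ?mulr0 //; left.
apply: le_trans (_ : 0 <= 1) => //.
by rewrite mulr_ge0_le0 // ltW // two_pow_gt0.
Qed.

Lemma Van_bounded phi : Van phi -> (forall v, derivable phi v 1) ->
  exists B : R, forall v, `|phi v| <= B.
Proof.
move=> Hv Hd.
have cf : continuous phi.
  by move=> v; apply/differentiable_continuous/derivable1_diffP.
have ca : continuous (fun v => `|phi v|).
  move=> v; apply: continuous_comp; first exact: cf.
  exact: norm_continuous.
have [c _ Hc] := @EVT_max R (fun v => `|phi v|) 1 2 (ler1n R 2) (continuous_subspaceT ca).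
exists `|phi c| => v.
have [h|h] := boolP ((1 <= v) && (v <= 2)).
  by apply: Hc; rewrite in_itv /=.
rewrite (@Van_out phi v) ?normr0 //.
move: h; rewrite negb_and -!ltNge => /orP[h|h]; [left|right]; exact: ltW.
Qed.

Lemma term_der phi (c k0 t : R) : derivable phi (c * t) 1 ->
  is_derive t (1:R) (fun u => k0 * phi (c * u)) (k0 * (derive1 phi (c * t) * c)).
Proof.
move=> H.
have E : (fun u : R => c * u + 0) = (fun u => c * u) by apply: boolp.funext => u; rewrite addr0.
have ha := aff_der c 0 t; rewrite E in ha.
have h1 := @is_derive1_comp R phi (fun u => c * u) t _ c (derivableP H) ha.
have h2 := @is_deriveZ _ _ _ (phi \o (fun u => c * u)) k0 t 1 _ h1.
by rewrite derive1E; exact: h2.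
Qed.


Lemma near_gt_at (c t : R) : c < t -> \forall u \near t, c < u.
Proof. by move=> t0; apply: open_nbhs_nbhs; split => //; apply: open_gt. Qed.

Lemma near_lt_at (c t : R) : t < c -> \forall u \near t, u < c.
Proof. by move=> t0; apply: open_nbhs_nbhs; split => //; apply: open_lt. Qed.

Lemma pow2_lt (i j : nat) : (i < j)%N -> 2 * (2:R) ^+ i <= 2 ^+ j.
Proof. by move=> ij; rewrite -exprS; apply: ler_weXn2l => //; rewrite ler1n. Qed.

Lemma pow2_uniq (i j : nat) (h : R) : 1 < 2 ^+ i * h < 2 -> 1 < 2 ^+ j * h < 2 -> i = j.
Proof.
move=> /andP[a1 a2] /andP[b1 b2].
have h0 : 0 < h.
  rewrite ltNge; apply/negP => h0.
  have : 2 ^+ i * h <= 0 by rewrite mulr_ge0_le0 // ltW // two_pow_gt0.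
  lra.
have [ij|ij|//] := ltngtP i j.
  have := pow2_lt ij; rewrite -(ler_pM2r h0) -mulrA => H.
  have c1 : (2:R) < 2 * (2 ^+ i * h) by rewrite -[X in X < _]mulr1 ltr_pM2l.
  by have := lt_trans (lt_le_trans c1 H) b2; rewrite ltxx.
have := pow2_lt ij; rewrite -(ler_pM2r h0) -mulrA => H.
have c1 : (2:R) < 2 * (2 ^+ j * h) by rewrite -[X in X < _]mulr1 ltr_pM2l.
by have := lt_trans (lt_le_trans c1 H) a2; rewrite ltxx.
Qed.

Lemma Gl_der phi a t : Van phi -> (forall v, derivable phi v 1) -> Rapid a ->
  is_derive t (1:R) (Gl phi a) (Gl (derive1 phi) (fun k => 2 ^+ k * a k) t).
Proof.
move=> Hv Hd Ha.
have Hv' := Van_d1 Hv.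
have [t0|t0|->] := ltgtP t 0.
- rewrite (Gl_neg _ Hv' (ltW t0)).
  apply: near_eq_is_derive (is_derive_cst (0:R) t 1).
  near=> u; rewrite /= Gl_neg //; apply: ltW.
  by near: u; apply: near_lt_at.
- set M := Nt (t / 2).
  have t20 : 0 < t / 2 by rewrite divr_gt0.
  have HM : forall u, t / 2 < u -> 2 <= M%:R * u.
    move=> u tu; apply: ltW; apply: lt_le_trans (Nt_gt t20) _.
    by apply: ler_wpM2l => //; apply: ltW.
  have hS : is_derive t (1:R) (\sum_(k < M) (fun u => a k * phi (2 ^+ k * u)))
      (\sum_(k < M) (a k * (derive1 phi (2 ^+ k * t) * 2 ^+ k))).
    by apply: is_derive_sum => k; apply: term_der.
  rewrite fct_sumE in hS.
  apply: is_derive_eq.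
    apply: near_eq_is_derive hS.
    near=> u; rewrite (Gl_eq _ Hv (HM u _)) //.
    by near: u; apply: near_gt_at; rewrite ltr_pdivrMr // ltr_pMr // ltr1n.
  rewrite (Gl_eq _ Hv' (HM t _)); last by rewrite ltr_pdivrMr // ltr_pMr // ltr1n.
  by apply: eq_bigr => k _; ring.
- rewrite (Gl_neg _ Hv' (lexx 0)).
  apply: flat_derive => e e0.
  have [C HC] := Ha 2%N.
  have [B HB] := Van_bounded Hv Hd.
  set K := `|C * B| + 1.
  have K0 : 0 < K by rewrite /K ltr_pwDr.
  exists (e / K); first by rewrite divr_gt0.
  move=> h /andP[h0 hd].
  rewrite addr0 (Gl_neg _ Hv (lexx 0)) subr0.
  have [hneg|hpos] := lerP h 0.
    by rewrite Gl_neg // normr0 mulr_ge0 // ltW.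
  rewrite gtr0_norm // in hd *.
  case: (pselect (exists k : 'I_(Nt h), phi (2 ^+ k * h) != 0)).
  + move=> [k0 Hk0].
    have rk : forall k : nat, phi (2 ^+ k * h) != 0 -> 1 < 2 ^+ k * h < 2.
      move=> k Hk; apply/andP; split; rewrite ltNge; apply/negP => H;
        move/eqP: Hk; apply; apply: Van_out => //; by [left|right].
    rewrite /Gl (bigD1 k0) //= big1 ?addr0; last first.
      move=> k kne; apply/eqP; rewrite mulf_eq0; apply/orP; right.
      apply/negPn/negP => Hk; move/negP: kne; apply; apply/eqP/val_inj => /=.
      exact: pow2_uniq (rk _ Hk) (rk _ Hk0).
    set P := (2:R) ^+ k0.
    have P0 : 0 < P by apply: two_pow_gt0.
    have /andP[hP _] := rk _ Hk0; rewrite -/P in hP.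
    have hPe : K < P * e.
      have : K * h < e by rewrite -ltr_pdivlMl // mulrC.
      move=> H1; have : K < K * (P * h) by rewrite ltr_pMr.
      move=> H2; apply: lt_le_trans H2 _.
      rewrite mulrA [K * P]mulrC -mulrA ler_pM2l // ltW //.
    have Ca := HC k0; rewrite -/P in Ca.
    have Bp := HB (2 ^+ k0 * h); rewrite -/P in Bp.
    rewrite normrM.
    have a0 : 0 <= `|a k0| by [].
    have f0 : 0 <= `|phi (P * h)| by [].
    have : `|a k0| * P ^+ 2 * `|phi (P * h)| <= `|C * B|.
      apply: (@le_trans _ _ (C * B)); last exact: ler_norm.
      by apply: ler_pM => //; rewrite mulr_ge0 // exprn_ge0 // ltW.
    move=> H3.
    rewrite -(ler_pM2r (exprn_gt0 2 P0)).
    apply: le_trans (_ : `|C * B| <= _); first by rewrite mulrAC.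
    have : K * 1 <= (P * e) * (P * h) by apply: ler_pM => //; apply: ltW.
    rewrite mulr1 => H4; apply: le_trans (_ : K <= _); first by rewrite /K lerDl.
    apply: le_trans H4 _; rewrite expr2 le_eqVlt; apply/orP; left; apply/eqP; ring.
  + move=> Hn; rewrite /Gl big1 ?normr0 ?mulr_ge0 // ?ltW // => k _.
    have : phi (2 ^+ k * h) = 0.
      by apply/eqP/negPn/negP => Hk; apply: Hn; exists k.
    by move=> ->; rewrite mulr0.
Unshelve. all: by end_near.
Qed.

Lemma Rapid_pow a m : Rapid a -> Rapid (fun k => ((2:R) ^+ k) ^+ m * a k).
Proof.
move=> Ha j; have [C HC] := Ha (m + j)%N; exists C => k.
rewrite normrM ger0_norm; last by apply: exprn_ge0; apply: ltW; apply: two_pow_gt0.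
by rewrite mulrAC -exprD mulrC.
Qed.

Lemma Gl_smooth psi0 a : (forall n, Ck n psi0) -> Van psi0 -> Rapid a ->
  smooth (Gl psi0 a).
Proof.
move=> Cp Vp Ha.
have sp : smooth psi0 by apply/smoothP.
have VN : forall m, Van (derive1n m psi0).
  by elim => [//|m IH]; rewrite derive1nS; apply: Van_d1.
have key : forall m, derive1n m (Gl psi0 a) =
    Gl (derive1n m psi0) (fun k => ((2:R) ^+ k) ^+ m * a k).
  elim => [|m IH].
    by rewrite derive1n0; congr Gl; apply: boolp.funext => k; rewrite expr0 mul1r.
  rewrite derive1nS IH; apply: boolp.funext => t.
  rewrite (is_derive_d1 (Gl_der t (VN m) (sp m) (Rapid_pow m Ha))).
  rewrite derive1nS; congr Gl; apply: boolp.funext => k.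
  by rewrite mulrA -exprS.
move=> m t; rewrite key.
by case: (Gl_der t (VN m) (sp m) (Rapid_pow m Ha)).
Qed.

End Layer3.


Section Layer4.
Variable R : realType.
Implicit Types (a : nat -> R).

Lemma psi_Van : Van (@psi R).
Proof. by move=> v [h|h]; apply: psi_out; [left|right]; apply: ltW. Qed.

Lemma Rapid_of a n : (forall k, (n < k)%N -> `|a k| * ((2:R) ^+ k) ^+ k <= 1) -> Rapid a.
Proof.
move=> H j.
exists (1 + \sum_(k < n + j + 1) `|a k| * ((2:R) ^+ k) ^+ j) => k.
have t1 : (1:R) <= 2 ^+ k by apply: exprn_ege1; rewrite ler1n.
have [lt|ge] := ltnP k (n + j + 1).
  apply: le_trans (_ : \sum_(k < n + j + 1) `|a k| * ((2:R) ^+ k) ^+ j <= _); last by rewrite lerDr.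
  rewrite (bigD1 (Ordinal lt)) //= lerDl; apply: sumr_ge0 => i _.
  by apply: mulr_ge0 => //; apply: exprn_ge0; apply: exprn_ge0.
apply: le_trans (_ : 1 <= _); last first.
  by rewrite lerDl; apply: sumr_ge0 => i _; apply: mulr_ge0 => //; apply: exprn_ge0; apply: exprn_ge0.
apply: le_trans (H k _); last by lia.
apply: ler_wpM2l => //; apply: ler_weXn2l => //.
by lia.
Qed.

Definition tk (j : nat) : R := 3 / 2 / 2 ^+ j.

Lemma scale_cases (j k : nat) (sg : R) : k != j -> 3/2 <= sg <= 7/4 ->
  (2 ^+ k * (sg / 2 ^+ j) <= 7/8) \/ (3 <= 2 ^+ k * (sg / 2 ^+ j)).
Proof.
move=> kj /andP[s1 s2].
have pj := @two_pow_gt0 R j; have pk := @two_pow_gt0 R k.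
have [lt|gt|eq] := ltngtP k j; last by rewrite eq eqxx in kj.
  left; have := pow2_lt R lt => H.
  rewrite mulrA ler_pdivrMr //.
  have : 2 ^+ k * sg <= 2 ^+ k * (7/4) by rewrite ler_pM2l.
  move=> H2; apply: le_trans H2 _.
  have H3 : 7/8 * (2 * 2 ^+ k) <= 7/8 * (2:R) ^+ j by rewrite ler_pM2l.
  apply: le_trans H3; have -> : (7/8 : R) * (2 * 2 ^+ k) = 2 ^+ k * (7/4) by field. done.
right; have := pow2_lt R gt => H.
rewrite mulrA ler_pdivlMr //.
have : 2 ^+ k * (3/2) <= 2 ^+ k * sg by rewrite ler_pM2l.
move=> H2; apply: (le_trans _ H2).
have H3 : 3/2 * (2 * 2 ^+ j) <= 3/2 * (2:R) ^+ k by rewrite ler_pM2l.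
rewrite [X in _ <= X]mulrC; apply: (le_trans _ H3); rewrite mulrA; apply: ler_wpM2r; last by lra.
exact: ltW.
Qed.

Lemma mulKdiv (p sg : R) : 0 < p -> p * (sg / p) = sg.
Proof. by move=> p0; rewrite mulrC -mulrA mulVf ?mulr1 // gt_eqF. Qed.

Lemma Gl_point a (j : nat) (sg : R) : 3/2 <= sg <= 7/4 ->
  Gl (@psi R) a (sg / 2 ^+ j) = a j.
Proof.
move=> /andP[s1 s2].
have pj := @two_pow_gt0 R j.
have M2 : 2 <= (2 ^ j.+1)%:R * (sg / 2 ^+ j).
  rewrite natrX exprS -mulrA mulKdiv; lra.
rewrite (Gl_eq a psi_Van M2).
have jlt : (j < 2 ^ j.+1)%N by apply: ltn_trans (ltn_expl _ _); [exact: ltnSn|].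
rewrite (bigD1 (Ordinal jlt)) //= big1 ?addr0.
  rewrite mulKdiv // psi_in ?mulr1 //; apply/andP; split; lra.
move=> k kne; rewrite psi_out ?mulr0 //.
have kj : (k : nat) != j.
  by apply: contra kne => /eqP kj; apply/eqP/val_inj.
case: (scale_cases kj (sg := sg) _) => [|h|h]; first by lra.
  by left; lra.
by right; lra.
Qed.

Definition chi (d tau t : R) := beta (d^-1 * t + (-(tau * d^-1 + 1))).

Lemma chi_Ck n d tau : Ck n (chi d tau).
Proof. by apply: Ck_aff; apply: beta_Ck. Qed.

Lemma chi_eq d tau t : chi d tau t = beta ((t - tau) / d - 1).
Proof. by rewrite /chi; congr beta; ring. Qed.

Lemma chi_left d tau t : 0 < d -> t <= tau -> chi d tau t = 0.
Proof.
move=> d0 tt; rewrite chi_eq beta_out //; left.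
have : (t - tau) / d <= 0 by rewrite pmulr_lle0 ?invr_gt0 // subr_le0.
lra.
Qed.

Lemma chi_right d tau t : 0 < d -> tau + 2 * d <= t -> chi d tau t = 0.
Proof.
move=> d0 tt; rewrite chi_eq beta_out //; right.
have : 2 <= (t - tau) / d by rewrite ler_pdivlMr //; lra.
lra.
Qed.

Lemma chi_at1 d tau : 0 < d -> chi d tau (tau + d) = 1.
Proof.
move=> d0; rewrite chi_eq beta_in //.
have -> : (tau + d - tau) / d - 1 = 0 by field; rewrite gt_eqF.
by apply/andP; split; lra.
Qed.

Lemma chi_off (j k : nat) (sg d : R) : k != j -> 3/2 <= sg <= 7/4 -> 0 < d ->
  2 ^+ k * d <= 1/4 -> chi d (tk k) (sg / 2 ^+ j) = 0.
Proof.
move=> kj hs d0 hd.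
have pk := @two_pow_gt0 R k.
case: (scale_cases kj hs) => h.
  apply: chi_left => //.
  rewrite /tk -(ler_pM2l pk) [X in _ <= X]mulKdiv //; lra.
apply: chi_right => //.
rewrite /tk -(ler_pM2l pk) mulrDr mulKdiv // mulrCA; lra.
Qed.

Definition cc (x : nat -> R) (P Q : nat -> nat -> R) (dl : nat -> R) (t : R) (n : nat) : R :=
  x n + Gl (@psi R) (fun k => P k n - x n) t +
  \sum_(k < n.+1) (Q k n - P k n) * chi (dl k) (tk k) t.

Section Curve.
Variables (x : nat -> R) (P Q : nat -> nat -> R) (dl : nat -> R).
Hypothesis HP : forall k i, (i < k)%N -> `|P k i - x i| * ((2:R) ^+ k) ^+ k <= 1.
Hypothesis HQ : forall k i, (i < k)%N -> Q k i = P k i.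
Hypothesis Hd0 : forall k, 0 < dl k.
Hypothesis Hd1 : forall k, 2 ^+ k * dl k <= 1/4.

Lemma cc_smooth n : smooth (fun t => cc x P Q dl t n).
Proof.
apply/smoothP => m.
have -> : (fun t => cc x P Q dl t n) = (cst (x n) + Gl (@psi R) (fun k => P k n - x n)) +
   (fun t => \sum_(k < n.+1) (Q k n - P k n) * chi (dl k) (tk k) t) by [].
apply: CkD; last by apply: (@Ck_sum _ _ _ (fun k t => (Q k n - P k n) * chi (dl k) (tk k) t)) => k; apply: Ck_scale; apply: chi_Ck.
apply: CkD; first exact: Ck_cst.
have HR : Rapid (fun k => P k n - x n) by apply: (@Rapid_of _ n) => k nk; apply: HP.
have := Gl_smooth (fun m => @psi_Ck R m) psi_Van HR.
by move/smoothP; apply.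
Qed.

Lemma cc0 n : cc x P Q dl 0 n = x n.
Proof.
have G0 : Gl (@psi R) (fun k => P k n - x n) 0 = 0 by apply: Gl_neg; [exact: psi_Van|]. rewrite /cc G0 addr0 big1 ?addr0 // => k _.
rewrite chi_left ?mulr0 //; rewrite /tk divr_ge0 //; exact: ltW (two_pow_gt0 _ _).
Qed.

Lemma ccP j n : cc x P Q dl (tk j) n = P j n.
Proof.
have s : (3/2 : R) <= (3/2 : R) <= (7/4 : R) by apply/andP; split; lra.
rewrite /cc {1}/tk Gl_point // big1 ?addr0; first by ring.
move=> k _; have [->|kj] := eqVneq (k : nat) j.
  by rewrite chi_left ?mulr0.
by rewrite /tk chi_off ?mulr0.
Qed.

Lemma ccQ j n : cc x P Q dl (tk j + dl j) n = Q j n.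
Proof.
have pj := @two_pow_gt0 R j.
set sg := 3/2 + 2 ^+ j * dl j.
have e : tk j + dl j = sg / 2 ^+ j.
  by rewrite /sg /tk; field; rewrite gt_eqF.
have s : 3/2 <= sg <= 7/4.
  have := Hd1 j; have := Hd0 j => h1 h2.
  have : 0 <= 2 ^+ j * dl j by rewrite mulr_ge0 // ltW.
  by rewrite /sg => h3; apply/andP; split; lra.
rewrite /cc e Gl_point //.
have [jn|nj] := ltnP j n.+1.
  rewrite (bigD1 (Ordinal jn)) //= -e chi_at1 // mulr1 big1 ?addr0; first by ring.
  move=> k kne; have kj : (k : nat) != j.
    by apply: contra kne => /eqP kj; apply/eqP/val_inj.
  by rewrite e chi_off ?mulr0.
rewrite big1 ?addr0; last first.
  move=> k _; have kj : (k : nat) != j.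
    by apply/eqP => kj; move: (ltn_ord k); rewrite kj ltnNge nj.
  by rewrite chi_off ?mulr0.
rewrite HQ //; by ring.
Qed.

End Curve.

End Layer4.


Section Layer5.
Variable R : realType.
Local Notation tk := (@tk R).

Lemma box_open (I : eqType) (s : seq I) (p : {ptws I -> R^o}) (c : R) :
  open [set q : {ptws I -> R^o} | forall i, i \in s -> `|q i - p i| < c].
Proof.
elim: s => [|i s IH].
  have -> : [set q : {ptws I -> R^o} | forall i, i \in [::] -> `|q i - p i| < c] = setT.
    by apply/seteqP; split => // q _ i.
  exact: openT.
have -> : [set q : {ptws I -> R^o} | forall j, j \in i :: s -> `|q j - p j| < c] =
  (@proj I (fun _ => R^o) i) @^-1` [set v : R^o | `|v - p i| < c] `&`
  [set q : {ptws I -> R^o} | forall j, j \in s -> `|q j - p j| < c].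
  apply/seteqP; split => q /=.
    by move=> H; split; [apply: H; rewrite mem_head|move=> j js; apply: H; rewrite in_cons js orbT].
  by move=> [H1 H2] j; rewrite in_cons => /orP[/eqP->//|]; apply: H2.
apply: openI => //.
apply: open_comp; last first.
  have -> : [set v : R^o | `|v - p i| < c] = ball (p i) c.
    by apply/seteqP; split => v /=; rewrite /ball /= distrC.
  exact: ball_open.
move=> q _; exact: proj_continuous.
Qed.

Definition rk (k : nat) : R := (((2:R) ^+ k) ^+ k)^-1.

Lemma rk_gt0 k : 0 < rk k.
Proof. by rewrite /rk invr_gt0 exprn_gt0 // two_pow_gt0. Qed.

Definition Vk (x : RN R) (k : nat) : set (RN R) :=
  [set y | forall i, (i < k)%N -> `|y i - x i| < rk k].

Lemma Vk_open x k : open (Vk x k).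
Proof.
have -> : Vk x k = [set q : {ptws nat -> R^o} | forall i, i \in iota 0 k -> `|q i - x i| < rk k].
  by apply/seteqP; split => q /= H i; [rewrite mem_iota add0n => /H|move=> ik; apply: H; rewrite mem_iota add0n].
exact: box_open.
Qed.

Lemma Vk_self x k : Vk x k x.
Proof. by move=> i _; rewrite subrr normr0 rk_gt0. Qed.

Lemma Vk_HP x k y i : Vk x k y -> (i < k)%N -> `|y i - x i| * ((2:R) ^+ k) ^+ k <= 1.
Proof.
move=> H ik; have := H i ik; rewrite /rk => h.
rewrite -ler_pdivlMr ?exprn_gt0 ?two_pow_gt0 // mul1r; exact: ltW.
Qed.

Lemma pow_small (d : R) (N : nat) : 0 < d -> exists j, (N <= j)%N /\ 2 / 2 ^+ j < d.
Proof.
move=> d0; exists (maxn N (Num.truncn (2 / d)).+1); split; first exact: leq_maxl.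
set j := maxn _ _.
have pj := @two_pow_gt0 R j.
rewrite ltr_pdivrMr // -ltr_pdivrMl // mulrC.
apply: lt_le_trans (truncnS_gt _) _.
apply: le_trans (two_pow_ge _ j); rewrite ler_nat; exact: leq_maxr.
Qed.

Lemma dl_ok (e : R) k : 0 < e -> e <= 1/4 / 2 ^+ k -> 0 < e /\ 2 ^+ k * e <= 1/4.
Proof.
move=> e0 he; split => //.
have pk := @two_pow_gt0 R k.
by rewrite mulrC -ler_pdivlMr.
Qed.

Lemma f_cont_eps (f : RN R -> R) : Cinf_RN f ->
  forall (y0 : RN R) (e : R), 0 < e -> exists k, forall y, Vk y0 k y -> `|f y - f y0| < e.
Proof.
move=> Hf y0 e e0; apply: contrapT => H.
have H' : forall k, exists y, Vk y0 k y /\ e <= `|f y - f y0|.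
  move=> k; apply: contrapT => Hk; apply: H; exists k => y Vy.
  rewrite ltNge; apply/negP => ey; apply: Hk; exists y; split => //.
have [P HP] := boolp.choice H'.
pose dl (k : nat) : R := 1/4 / 2 ^+ k.
have Hd k : 0 < dl k /\ 2 ^+ k * dl k <= 1/4.
  by apply: dl_ok; rewrite // divr_gt0 // two_pow_gt0.
pose c : R -> RN R := fun t => (fun n => cc y0 P P dl t n).
have sc : structure_curve c.
  move=> n; apply: (@cc_smooth R y0 P P dl).
  - by move=> k i ik; apply: Vk_HP (proj1 (HP k)) ik.
have sF := Hf c sc.
have cF : {for 0, continuous (f \o c)}.
  apply/differentiable_continuous/derivable1_diffP; exact: (sF 0%N 0).
have c0 : c 0 = y0. refine (@boolp.funext nat R^o (fun n => cc y0 P P dl 0 n) y0 _).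
  by move=> n; apply: cc0 => k; case: (Hd k).
have cP j : c (tk j) = P j.
  refine (@boolp.funext nat R^o (fun n => cc y0 P P dl (tk j) n) (P j) _) => n.
  by apply: ccP => k; case: (Hd k).
have /(_ _ e e0) := (cvgrPdist_lt _ _).1 cF.
move=> /nbhs_ballP [d d0 Hd'].
have [j [_ hj]] := pow_small 0 d0.
have := Hd' (tk j); rewrite /ball /= sub0r normrN.
have tj : 0 < tk j by rewrite /tk divr_gt0 // two_pow_gt0.
rewrite gtr0_norm // => /(_ _).
have : tk j < d.
  apply: le_lt_trans hj; rewrite /tk ler_pM2r ?invr_gt0 ?two_pow_gt0 //; lra.
move=> td /(_ td); rewrite /= c0 cP distrC.
by move: (proj2 (HP j)) => h1 h2; move: (le_lt_trans h1 h2); rewrite ltxx.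
Qed.

Lemma local_dep (f : RN R -> R) : Cinf_RN f -> forall x : RN R,
  exists k, forall y z, Vk x k y -> Vk x k z ->
    (forall i, (i < k)%N -> y i = z i) -> f y = f z.
Proof.
move=> Hf x; apply: contrapT => H.
have H' : forall k, exists yz : RN R * RN R, [/\ Vk x k yz.1, Vk x k yz.2,
    (forall i, (i < k)%N -> yz.1 i = yz.2 i) & f yz.1 != f yz.2].
  move=> k; apply: contrapT => Hk; apply: H; exists k => y z Vy Vz yz.
  apply: contrapT => fyz; apply: Hk; exists (y, z); split => //; exact/eqP.
have [YZ HYZ] := boolp.choice H'.
pose Y k := (YZ k).1.
pose Z k := (YZ k).2.
pose D k := `|f (Z k) - f (Y k)|.
have D0 k : 0 < D k.
  rewrite /D normr_gt0 subr_eq0 eq_sym; by case: (HYZ k).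
pose dl (k : nat) : R := Num.min (1/4 / 2 ^+ k) (D k / (k.+1)%:R).
have Hd k : 0 < dl k /\ 2 ^+ k * dl k <= 1/4.
  apply: dl_ok.
    by rewrite /dl lt_min divr_gt0 ?two_pow_gt0 // divr_gt0 // ltr0n.
  by rewrite /dl ge_min lexx.
have HP : forall k i, (i < k)%N -> `|Y k i - x i| * ((2:R) ^+ k) ^+ k <= 1.
  by move=> k i ik; apply: Vk_HP ik; case: (HYZ k).
have HQ : forall k i, (i < k)%N -> Z k i = Y k i.
  by move=> k i ik; case: (HYZ k) => _ _ h _; rewrite /Y /Z h.
pose c : R -> RN R := fun t => (fun n => cc x Y Z dl t n).
have sc : structure_curve c by move=> n; apply: (@cc_smooth R x Y Z dl).
have sF := Hf c sc.
set F := f \o c.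
have cP j : c (tk j) = Y j.
  refine (@boolp.funext nat R^o (fun n => cc x Y Z dl (tk j) n) (Y j) _) => n.
  by apply: ccP => k; case: (Hd k).
have cQ j : c (tk j + dl j) = Z j.
  refine (@boolp.funext nat R^o (fun n => cc x Y Z dl (tk j + dl j) n) (Z j) _) => n.
  by apply: ccQ => // k; case: (Hd k).
have cF' : {for 0, continuous (derive1 F)}.
  apply/differentiable_continuous/derivable1_diffP; exact: (sF 1%N 0).
have /(_ _ 1 ltr01) := (cvgrPdist_lt _ _).1 cF'.
move=> /nbhs_ballP [d d0 Hd'].
set B := `|derive1 F 0| + 1.
have [j [jB hj]] := pow_small (Num.truncn B) d0.
have pj := @two_pow_gt0 R j.
have [dj0 dj1] := Hd j.
have tj : 0 < tk j by rewrite /tk divr_gt0.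
have ab : tk j < tk j + dl j by rewrite ltrDl.
have Hder : forall t, t \in `](tk j), (tk j + dl j)[ -> is_derive t (1:R) F (derive1 F t).
  by move=> t _; rewrite derive1E; apply: derivableP; exact: (sF 0%N t).
have Hcont : {within `[(tk j), (tk j + dl j)], continuous F}.
  apply: continuous_subspaceT => t.
  by apply/differentiable_continuous/derivable1_diffP; exact: (sF 0%N t).
have [xi xiin Hmvt] := MVT ab Hder Hcont.
move: xiin; rewrite in_itv /= => /andP[xi1 xi2].
have xid : `|xi| < d.
  rewrite gtr0_norm; last by apply: lt_trans xi1.
  apply: lt_trans hj; apply: lt_le_trans xi2 _.
  have : dl j <= 1/4 / 2 ^+ j by rewrite /dl ge_min lexx.
  rewrite /tk => h; apply: le_trans (lerD (lexx _) h) _.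
  rewrite -mulrDl ler_pM2r ?invr_gt0 //; lra.
have Hxi := Hd' xi; rewrite /ball /= sub0r normrN in Hxi.
have {Hxi} Hxi := Hxi xid.
have Bxi : `|derive1 F xi| < B.
  have h := ler_normB (derive1 F 0) (derive1 F 0 - derive1 F xi).
  have e1 : derive1 F 0 - (derive1 F 0 - derive1 F xi) = derive1 F xi by ring.
  rewrite e1 in h.
  by apply: le_lt_trans h _; rewrite ltrD2l.
have FD : `|F (tk j + dl j) - F (tk j)| = D j by rewrite /F /= cP cQ.
rewrite Hmvt normrM addrAC subrr add0r (gtr0_norm dj0) in FD.
have dlD : dl j <= D j / (j.+1)%:R by rewrite /dl ge_min lexx orbT.
have Bj : B < (j.+1)%:R.
  apply: lt_le_trans (truncnS_gt B) _; rewrite ler_nat; exact: jB.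
have : D j < D j.
  rewrite -{1}FD.
  apply: (@lt_le_trans _ _ (B * dl j)); first by rewrite ltr_pM2r.
  apply: (@le_trans _ _ (B * (D j / (j.+1)%:R))).
    have B0 : 0 < B by rewrite /B; have := normr_ge0 (derive1 F 0); lra.
    by rewrite ler_pM2l.
  rewrite mulrCA ger_pMr ?D0 //.
  rewrite ler_pdivrMr ?ltr0n // mul1r; exact: ltW.
by rewrite ltxx.
Qed.

End Layer5.


Section Main.
Variable R : realType.

Definition extN (N0 : {fset nat}) (x : RN R) (p : RN0 R N0) : RN R :=
  fun i => if insub i is Some j then p j else x i.

Lemma extN_in (N0 : {fset nat}) x p (j : N0) : extN x p (val j) = p j.
Proof.
rewrite /extN; case: insubP => [j' _ vj|]; last by rewrite (valP j).
by congr p; apply: val_inj.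
Qed.

Lemma extN_out (N0 : {fset nat}) x (p : RN0 R N0) i : i \notin N0 -> extN x p i = x i.
Proof. by move=> ni; rewrite /extN; case: insubP => // j ij; rewrite ij in ni. Qed.

Lemma extN_cont (f : RN R -> R) (N0 : {fset nat}) x : Cinf_RN f ->
  continuous (fun p : RN0 R N0 => (f (extN x p) : R^o)).
Proof.
move=> Hf p A /nbhs_ballP [e e0 HA].
have [k' Hk'] := f_cont_eps Hf (extN x p) e0.
have W := @box_open R N0 (enum (fun _ : N0 => true)) p (rk R k').
have Wn := open_nbhs_nbhs (conj W (fun j _ => _ : `|p j - p j| < rk R k')).
have pp : forall j : N0, `|p j - p j| < rk R k' by move=> j; rewrite subrr normr0 rk_gt0.
apply: filterS (Wn pp) => q Wq.
apply: HA; rewrite /ball /=.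
rewrite distrC; apply: Hk' => i ik.
have [iN|iN] := boolP (i \in N0).
  have -> : i = val ([` iN]%fset : N0) by [].
  by rewrite !extN_in; apply: Wq; rewrite mem_enum.
by rewrite !extN_out // subrr normr0 rk_gt0.
Qed.
End Main.


End Helpers.
Import Helpers.

Theorem proposition6 (R : realType) (f : RN R -> R) :
  Cinf_RN f ->
  forall x : RN R,
    exists (U : set (RN R)) (N0 : {fset nat}) (g : RN0 R N0 -> R^o),
      [/\ open U, U x,
          {within proj_N0 N0 @` U, continuous g} &
          forall y, U y -> f y = g (proj_N0 N0 y)].
Proof.
move=> Hf x.
have [k Hk] := local_dep Hf x.
pose N0 : {fset nat} := seq_fset tt (iota 0 k).
have memN i : (i \in N0) = (i < k)%N by rewrite seq_fsetE mem_iota add0n.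
exists (Vk x k), N0, (fun p => f (extN x p)); split.
- exact: Vk_open.
- exact: Vk_self.
- by apply: continuous_subspaceT; apply: extN_cont.
move=> y Vy.
have agree : forall i, (i < k)%N -> y i = extN x (proj_N0 N0 y) i.
  move=> i ik; have iN : i \in N0 by rewrite memN.
  have -> : i = val ([` iN]%fset : N0) by [].
  by rewrite extN_in.
apply: Hk => // i ik; rewrite -agree //; exact: Vy.
Qed.
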